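(* Let $d\ge2$, $p\ge1$, $k\ge1$. Define $\psi:\mathcal{C}_k^{(d)}\to\mathbb{R}$ by $$\psi:=\frac{1}{dk+1}\sum_{j\ge p}\ \sum_{v\in\{1,\dots,d\}^j}\ \sum_{\substack{\mathcal{S}=\mathrm{Sh}(T;v_0,\dots,v_p=v)\\\text{for some }T\in\mathcal{C}_k^{(d)}}}\mathbf{1}_{\mathcal{S}},$$ where for each code $v$ the inner sum is over the distinct sets $\mathcal{S}$ arising as shuffle classes of the path of length $p$ ending at the vertex with code $v$ in some tree $T\in\mathcal{C}_k^{(d)}$ containing $v$. Then $\psi$ lies in the span of the length-$p$ shuffle indicators, and $$\sup_{T\in\mathcal{C}_k^{(d)}}|\psi(T)-1|\le\frac{C_{d,p}}{dk+1},\qquad C_{d,p}:=\frac{d^p-1}{d-1}.$$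
   Context: A $d$-Catalan tree is a rooted planar tree in which each vertex has $0$ or $d$ children; $\mathcal{C}_k^{(d)}$ is the set of those with $k$ internal vertices (so $dk+1$ vertices). Vertices are coded by words in $\bigcup_{j\ge0}\{1,\dots,d\}^j$: the root is the empty word and the children of the vertex with code $u$ are $u1,\dots,ud$ from left to right; the code length is the height. For a path $(v_0,\dots,v_p)$ ($v_i$ a child of $v_{i-1}$) in $T$, $\mathrm{Sh}(T;v_0,\dots,v_p)$ is the set of trees in $\mathcal{C}_k^{(d)}$ obtained by rearranging the $(d-1)p$ subtrees subtended by the siblings of $v_1,\dots,v_p$ among those positions; these are the length-$p$ shuffle classes, with indicators $\mathbf{1}_{\mathcal{S}}$. *)

(* Defs.v *)
From HB Require Import structures.
From mathcomp Require Import all_boot all_order all_algebra all_fingroup.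
Set Implicit Arguments. Unset Strict Implicit. Unset Printing Implicit Defensive.
Import Order.TTheory GRing.Theory Num.Theory.

(* Vertex codes: words over the alphabet 'I_d (letter b : 'I_d stands for the
   paper's letter b+1 in {1,...,d}) of length at most k.  A d-Catalan tree with
   k internal vertices has height at most k, so all of its vertex codes live in
   the finite type [code d k]; a tree is represented by its set of vertex codes. *)
Definition code (d k : nat) := {n : 'I_k.+1 & n.-tuple 'I_d}.

Definition cword d k (c : code d k) : seq 'I_d := val (tagged c).

Definition inT d k (T : {set code d k}) (s : seq 'I_d) : bool :=
  [exists c in T, cword c == s].

Definition all_children d k (T : {set code d k}) (c : code d k) : bool :=
  [forall b : 'I_d, inT T (rcons (cword c) b)].
Definition no_children d k (T : {set code d k}) (c : code d k) : bool :=
  [forall b : 'I_d, ~~ inT T (rcons (cword c) b)].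

Definition dcatalan d k (T : {set code d k}) : bool :=
  [&& inT T [::],
      [forall c in T, forall m : 'I_k.+1, inT T (take m (cword c))],
      [forall c in T, all_children T c || no_children T c] &
      #|[set c in T | all_children T c]| == k].

(* positions of the siblings of v_1, ..., v_p on the path (v_0,...,v_p = v),
   where v_0 is the ancestor of v at height |v| - p *)
Definition is_pos d k (v : code d k) (p : nat) (c : code d k) : bool :=
  let w := cword v in
  [exists i : 'I_k, exists b : 'I_d,
     [&& size w - p <= i, i < size w, b != nth b w i &
         cword c == rcons (take i w) b]].

Definition pos d k (v : code d k) (p : nat) : {set code d k} :=
  [set c | is_pos v p c].

(* membership of the word x in the tree obtained from T by putting at each
   sibling position q the subtree of T rooted at s q *)
Definition shuffled d k (v : code d k) (p : nat) (T : {set code d k})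
    (s : {perm code d k}) (x : seq 'I_d) : bool :=
  if [pick q in pos v p | prefix (cword q) x] is Some q
  then inT T (cword (s q) ++ drop (size (cword q)) x)
  else inT T x.

Definition Sh d k (T : {set code d k}) (v : code d k) (p : nat)
    : {set {set code d k}} :=
  [set T' | dcatalan T' &&
     [exists s : {perm code d k},
        perm_on (pos v p) s &&
        [forall c, (c \in T') == shuffled v p T s (cword c)]]].

Definition trees_with d k (v : code d k) : {set {set code d k}} :=
  [set T | dcatalan T & v \in T].

Definition classes_at d k (v : code d k) (p : nat)
    : {set {set {set code d k}}} :=
  [set Sh T v p | T in trees_with v].

Definition shuffle_classes d k (p : nat) : {set {set {set code d k}}} :=
  \bigcup_(v : code d k | p <= size (cword v)) classes_at v p.

Local Open Scope ring_scope.

Definition psi (R : numFieldType) d k (p : nat) (T : {set code d k}) : R :=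
  ((d * k + 1)%N%:R)^-1 *
  \sum_(v : code d k | (p <= size (cword v))%N)
     \sum_(S in classes_at v p) (T \in S)%:R.

(* Main.v *)
Require Import Defs.
From mathcomp Require Import all_boot all_order all_algebra all_fingroup.
From mathcomp Require Import zify.
Import Order.TTheory GRing.Theory Num.Theory.
Set Implicit Arguments. Unset Strict Implicit. Unset Printing Implicit Defensive.

Section Codes.
Variables d k : nat.
Implicit Types (T : {set code d k}) (c : code d k) (w x : seq 'I_d).

Lemma size_cword c : size (cword c) <= k.
Proof. case: c => n t; rewrite /cword /= size_tuple; exact: (ltn_ord n). Qed.

Lemma cword_inj : injective (@cword d k).
Proof.
case=> [n1 t1] [n2 t2]; rewrite /cword /= => E.
have En : n1 = n2 by apply: val_inj; rewrite /= -(size_tuple t1) -(size_tuple t2) E.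
subst n2; congr existT; exact: val_inj.
Qed.

Definition mkc w (H : size w < k.+1) : code d k :=
  existT (fun n : 'I_k.+1 => n.-tuple 'I_d) (Ordinal H) (in_tuple w).

Lemma mkc_word w H : cword (@mkc w H) = w.
Proof. by []. Qed.

Definition root_code : code d k :=
  existT (fun n : 'I_k.+1 => n.-tuple 'I_d) ord0 [tuple].

Definition mk w : code d k := odflt root_code [pick c | cword c == w].

Lemma mkK w : size w <= k -> cword (mk w) = w.
Proof.
move=> H; rewrite /mk; case: pickP => [c /eqP //|/(_ (@mkc w H))].
by rewrite mkc_word eqxx.
Qed.

Lemma mk_cword c : mk (cword c) = c.
Proof. apply: cword_inj; rewrite mkK //; exact: size_cword. Qed.

Lemma inT_code T c : inT T (cword c) = (c \in T).
Proof.
apply/existsP/idP => [[c' /andP[H /eqP /cword_inj <-]] //| H].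
by exists c; rewrite H eqxx.
Qed.

Lemma inT_mk T w : inT T w -> (mk w \in T) /\ cword (mk w) = w.
Proof.
case/existsP => c /andP[H /eqP <-]; by rewrite mk_cword.
Qed.

Lemma inT_long T w : k < size w -> inT T w = false.
Proof.
move=> Hw; apply/existsP => [[c /andP[_ /eqP E]]].
by move: (size_cword c); rewrite E leqNgt Hw.
Qed.

Lemma inT_size T w : inT T w -> size w <= k.
Proof. by case/inT_mk => _ <-; apply: size_cword. Qed.

End Codes.
Arguments mk {d k} w.
Arguments root_code {d k}.

Section Pos.
Variables d k : nat.
Implicit Types (T : {set code d k}) (c q v : code d k) (w x : seq 'I_d).

Lemma posD v p q : q \in pos v p -> exists i b,
  [/\ size (cword v) - p <= i, i < size (cword v), b != nth b (cword v) i,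
      size (cword q) = i.+1 &
      (forall z j, j < i -> nth z (cword q) j = nth z (cword v) j) /\
      (forall z, nth z (cword q) i = b)].
Proof.
rewrite inE => /existsP[i /existsP[b /and4P[H1 H2 H3 /eqP H4]]].
exists i, b; split => //; last split; rewrite H4.
- by rewrite size_rcons (size_takel (ltnW H2)).
- by move=> z j ji; rewrite nth_rcons (size_takel (ltnW H2)) ji nth_take.
- by move=> z; rewrite nth_rcons (size_takel (ltnW H2)) ltnn eqxx.
Qed.

Lemma prefix_nth w x z j : prefix w x -> j < size w -> nth z x j = nth z w j.
Proof. rewrite prefixE => /eqP E jw; by rewrite -E nth_take. Qed.

Lemma pos_uniq v p q1 q2 x : q1 \in pos v p -> q2 \in pos v p ->
  prefix (cword q1) x -> prefix (cword q2) x -> q1 = q2.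
Proof.
move=> P1 P2 X1 X2.
have key : forall q1 q2, q1 \in pos v p -> q2 \in pos v p ->
  prefix (cword q1) x -> prefix (cword q2) x ->
  size (cword q1) <= size (cword q2) -> q1 = q2.
  move=> {}q1 {}q2 {}P1 {}P2 {}X1 {}X2 le12.
  have [i1 [b1 [_ _ nb1 s1 [_ e1]]]] := posD P1.
  have [i2 [b2 [_ _ nb2 s2 [f2 e2]]]] := posD P2.
  move: le12; rewrite s1 s2 ltnS leq_eqVlt => /orP[/eqP E|lt].
    apply: cword_inj; move: X1 X2; rewrite !prefixE s1 s2 E => /eqP <- /eqP <-.
    done.
  have := prefix_nth b1 X1 (_ : i1 < size (cword q1)); rewrite s1 ltnSn => /(_ isT).
  rewrite e1 (prefix_nth b1 X2); last by rewrite s2 ltnS ltnW.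
  rewrite f2 // => E.
  by move: nb1; rewrite E eqxx.
case: (leqP (size (cword q1)) (size (cword q2))) => H; first exact: key.
by apply/esym/key => //; apply: ltnW.
Qed.

Lemma pos_not_prefix v p q : q \in pos v p -> ~~ prefix (cword q) (cword v).
Proof.
move=> P; have [i [b [_ iv nb s [_ e]]]] := posD P.
apply/negP => X; have := prefix_nth b X (_ : i < size (cword q)).
by rewrite s ltnSn e => /(_ isT) E; move: nb; rewrite E eqxx.
Qed.

Lemma shuffledE v p T s q x : q \in pos v p -> prefix (cword q) x ->
  shuffled v p T s x = inT T (cword (s q) ++ drop (size (cword q)) x).
Proof.
move=> P X; rewrite /shuffled; case: pickP => [q' /andP[P' X']|/(_ q)].
  by rewrite (pos_uniq P' P X' X).
by rewrite P X.
Qed.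

Lemma shuffledN v p T s x : (forall q, q \in pos v p -> ~~ prefix (cword q) x) ->
  shuffled v p T s x = inT T x.
Proof.
move=> H; rewrite /shuffled; case: pickP => [q' /andP[P' X']|//].
by move: (H _ P'); rewrite X'.
Qed.

Lemma shuffled_v v p T s : shuffled v p T s (cword v) = (v \in T).
Proof. by rewrite shuffledN ?inT_code // => q; apply: pos_not_prefix. Qed.

Lemma shuffled1 v p T x : shuffled v p T 1%g x = inT T x.
Proof.
rewrite /shuffled; case: pickP => [q /andP[_ X]|//].
by rewrite perm1 -{2}(cat_take_drop (size (cword q)) x); move: X; rewrite prefixE => /eqP ->.
Qed.

End Pos.

Section Height.
Variables d k : nat.
Implicit Types (T : {set code d k}) (c q v u : code d k) (w x y : seq 'I_d).

Definition Int T := [set c in T | all_children T c].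

Lemma prefix_internal T y m : dcatalan T -> inT T y -> m < size y ->
  exists c, c \in Int T /\ cword c = take m y.
Proof.
case/and4P=> _ /forallP H2 /forallP H3 _ Hy my.
have [Ty Ey] := inT_mk Hy.
have Hk := inT_size Hy.
have tk : forall n, n <= size y -> inT T (take n y).
  move=> n; rewrite leq_eqVlt => /orP[/eqP ->|ny]; first by rewrite take_size.
  have := H2 (mk y); rewrite Ty /= => /forallP.
  by move=> /(_ (@Ordinal k.+1 n (leq_trans ny (leq_trans Hk (leqnSn k))))); rewrite /= Ey.
have [Tc Ec] := inT_mk (tk m (ltnW my)).
exists (mk (take m y)); split => //; rewrite inE Tc /=.
have [z _] : exists z : 'I_d, True by case: (y) my => [//|a l] _; exists a.
have := H3 (mk (take m y)); rewrite Tc /= => /orP[//|/forallP NC].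
have := NC (nth z y m); rewrite Ec -take_nth //.
by rewrite tk.
Qed.

Lemma diverge T a b j z : dcatalan T -> inT T a -> inT T b ->
  j < size a -> j < size b -> nth z a j != nth z b j ->
  size a + (size b - j.+1) <= k.
Proof.
move=> dT Ta Tb ja jb nab.
have [N EN] : exists N, N = size a + (size b - j.+1) by eexists.
rewrite -EN.
pose gw (m : nat) := if m < size a then take m a else take (m - size a + j.+1) b.
have gwP : forall m : 'I_N, exists c, c \in Int T /\ cword c = gw m.
  move=> m; rewrite /gw; case: ifP => ma.
    exact: prefix_internal.
  move/negbT: ma; rewrite -leqNgt => ma.
  apply: prefix_internal => //; have := ltn_ord m; lia.
have sgw : forall m : 'I_N, size (gw m) = if m < size a then nat_of_ord m else m - size a + j.+1.
  move=> m; rewrite /gw; case: ifP => ma; rewrite size_takel //; first exact: ltnW.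
  move/negbT: ma; rewrite -leqNgt => ma.
  have := ltn_ord m; lia.
pose g (m : 'I_N) : code d k := mk (gw m).
have gI : forall m, g m \in Int T /\ cword (g m) = gw m.
  by move=> m; have [c [Hc Ec]] := gwP m; rewrite /g -Ec mk_cword.
have ginj : injective g.
  move=> m1 m2 E.
  have E' : gw m1 = gw m2 by rewrite -(gI m1).2 -(gI m2).2 E.
  have S := congr1 size E'; rewrite !sgw in S.
  apply: val_inj => /=.
  have key : forall m1 m2 : 'I_N, gw m1 = gw m2 -> m1 < size a -> size a <= m2 -> False.
    move=> n1 n2 En n1a n2a.
    have S2 := congr1 size En; rewrite !sgw n1a ltnNge n2a /= in S2.
    have := congr1 (fun s => nth z s j) En; rewrite /gw n1a ltnNge n2a /=.
    rewrite !nth_take; [|lia|lia].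
    by move=> E2; move: nab; rewrite E2 eqxx.
  move: S; case: ifP => h1; case: ifP => h2; try lia.
    by move=> _; case: (key m1 m2) => //; rewrite leqNgt h2.
  by move=> _; case: (key m2 m1) => //; rewrite leqNgt h1.
have : #|[set g m | m : 'I_N]| <= #|Int T|.
  apply: subset_leq_card; apply/subsetP => x /imsetP[m _ ->]; exact: (gI m).1.
rewrite card_imset // card_ord.
by case/and4P: dT => _ _ _ /eqP; rewrite -/(Int T) => ->.
Qed.

Lemma height_pos T v p u q r : dcatalan T -> v \in T -> u \in pos v p -> q \in pos v p ->
  inT T (cword u ++ r) -> size (cword q) + size r <= k.
Proof.
move=> dT vT uP qP Hr.
have [i [b [_ iv nb su [_ eu]]]] := posD uP.
have [i2 [b2 [_ iv2 _ sq _]]] := posD qP.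
have h1 : i < size (cword u ++ r) by rewrite size_cat su; lia.
have h2 : nth b (cword v) i != nth b (cword u ++ r) i by rewrite nth_cat su ltnSn eu eq_sym.
have H := @diverge T (cword v) (cword u ++ r) i b dT (eq_ind_r is_true vT (inT_code T v)) Hr iv h1 h2.
move: H; rewrite size_cat su sq; lia.
Qed.

End Height.

Section Shuffle.
Variables d k : nat.
Implicit Types (T : {set code d k}) (c q v u : code d k) (w x y : seq 'I_d).

Lemma shuffle_comp T' T v p (s t : {perm code d k}) :
  dcatalan T' -> v \in T' -> perm_on (pos v p) s -> perm_on (pos v p) t ->
  (forall c, (c \in T) = shuffled v p T' s (cword c)) ->
  forall x, size x <= k -> shuffled v p T t x = shuffled v p T' (t * s) x.
Proof.
move=> dT vT Hs Ht HT x xk.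
case: (pickP [pred q in pos v p | prefix (cword q) x]) => [q /andP[qP qx] | none].
  rewrite (shuffledE T t qP qx) (shuffledE T' (t*s)%g qP qx) permM.
  set r := drop (size (cword q)) x.
  have tqP : t q \in pos v p by rewrite (perm_closed _ Ht).
  have stqP : s (t q) \in pos v p by rewrite (perm_closed _ Hs).
  case: (leqP (size (cword (t q) ++ r)) k) => hk.
    have Ec := mkK hk.
    rewrite -Ec inT_code HT Ec (shuffledE T' s tqP (prefix_prefix _ _)).
    by rewrite drop_size_cat.
  rewrite inT_long //; apply/esym/negbTE/negP => H.
  have := height_pos dT vT stqP tqP H.
  by move: hk; rewrite size_cat; lia.
have nP : forall q, q \in pos v p -> ~~ prefix (cword q) x.
  by move=> q qP; apply/negP => X; move: (none q); rewrite /= qP X.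
rewrite !shuffledN // -(mkK xk) inT_code HT shuffledN // mkK //.
Qed.

Lemma ShP T T'' v p : T'' \in Sh T v p -> dcatalan T'' /\
  exists s : {perm code d k}, perm_on (pos v p) s /\
    forall c, (c \in T'') = shuffled v p T s (cword c).
Proof.
rewrite inE => /andP[dT /existsP[s /andP[Hs /forallP H]]].
by split => //; exists s; split => // c; apply/eqP.
Qed.

Lemma ShI T T'' v p (s : {perm code d k}) : dcatalan T'' -> perm_on (pos v p) s ->
  (forall c, (c \in T'') = shuffled v p T s (cword c)) -> T'' \in Sh T v p.
Proof.
move=> dT Hs H; rewrite inE dT /=; apply/existsP; exists s; rewrite Hs /=.
by apply/forallP => c; rewrite H.
Qed.

Lemma Sh_self T v p : dcatalan T -> T \in Sh T v p.
Proof.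
move=> dT; apply: (@ShI _ _ _ _ 1%g dT (perm_on1 _)) => c.
by rewrite shuffled1 inT_code.
Qed.

Lemma Sh_same T' T v p : dcatalan T' -> v \in T' -> T \in Sh T' v p ->
  Sh T' v p = Sh T v p.
Proof.
move=> dT' vT' /ShP[dT [s [Hs HT]]].
apply/setP => T''; apply/idP/idP.
  case/ShP => dT'' [s'' [Hs'' H'']].
  apply: (@ShI _ _ _ _ (s'' * s^-1)%g dT''); first by apply: perm_onM => //; apply: perm_onV.
  move=> c; rewrite (shuffle_comp dT' vT' Hs _ HT) ?size_cword ?mulgKV //.
  by apply: perm_onM => //; apply: perm_onV.
case/ShP => dT'' [t [Ht H'']].
apply: (@ShI _ _ _ _ (t * s)%g dT''); first exact: perm_onM.
by move=> c; rewrite H'' (shuffle_comp dT' vT' Hs Ht HT) ?size_cword.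
Qed.

Lemma count_classes T v p : dcatalan T ->
  #|[set S in classes_at v p | T \in S]| = (v \in T).
Proof.
move=> dT; case vT: (v \in T).
  rewrite (_ : [set S in _ | _] = [set Sh T v p]) ?cards1 //.
  apply/setP => S; rewrite !inE; apply/andP/eqP.
    case=> /imsetP[T0 + ->] TS; rewrite inE => /andP[dT0 vT0].
    exact: Sh_same.
  move=> ->; split; last exact: Sh_self.
  by apply/imsetP; exists T => //; rewrite inE dT vT.
apply/eqP; rewrite cards_eq0; apply/eqP/setP => S; rewrite !inE.
apply/negP => /andP[/imsetP[T0 + ->] /ShP[_ [s [_ H]]]].
rewrite inE => /andP[_ vT0].
by move: (H v); rewrite vT shuffled_v vT0.
Qed.

End Shuffle.

Section Count.
Variables d k : nat.
Implicit Types (T : {set code d k}) (c q v u x : code d k) (w y : seq 'I_d).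

Lemma sum_bool (I : finType) (A : {pred I}) (P : pred I) :
  \sum_(i in A) (P i : nat) = #|[set i in A | P i]|.
Proof.
rewrite (eq_bigr (fun i => if P i then 1 else 0)); last by move=> i _; case: (P i).
rewrite -big_mkcondr sum1_card; apply: eq_card => i; by rewrite !inE.
Qed.

Definition root0 : code d k := mk [::].
Lemma cword_root0 : cword root0 = [::].
Proof. by rewrite mkK. Qed.

Lemma nonroot x : x != root0 -> exists y z, cword x = rcons y z.
Proof.
move=> xr; move Ex: (cword x) => wx; case/lastP: wx Ex => [|y z] Ex.
  by move: xr; rewrite -(mk_cword x) Ex eqxx.
by exists y, z.
Qed.

Definition pw x := take (size (cword x)).-1 (cword x).

Lemma pw_rcons x y z : cword x = rcons y z -> pw x = y.
Proof. by move=> E; rewrite /pw E size_rcons /= -cats1 take_size_cat. Qed.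

Lemma children_card T c : dcatalan T -> c \in T ->
  #|[set x in T :\ root0 | pw x == cword c]| = (c \in Int T) * d.
Proof.
move=> dT cT; case cI: (c \in Int T).
  move: cI; rewrite inE cT /= => /forallP HAC.
  have inTb b : inT T (rcons (cword c) b) := HAC b.
  rewrite mul1n (_ : [set x in _ | _] = [set mk (rcons (cword c) b) | b : 'I_d]).
    rewrite card_imset ?card_ord // => b1 b2 E.
    have := congr1 (@cword d k) E; rewrite !(inT_mk (inTb _)).2 => E'.
    by have := congr1 (last b1) E'; rewrite !last_rcons.
  apply/setP => x; rewrite !inE; apply/andP/imsetP.
    case=> /andP[xr xT] /eqP E.
    have [y [z Ex]] := nonroot xr.
    exists z => //; apply: cword_inj; rewrite (inT_mk (inTb _)).2 Ex.
    by rewrite (pw_rcons Ex) in E; rewrite E.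
  case=> b _ ->; have [H1 H2] := inT_mk (inTb b).
  have P1 : pw (mk (rcons (cword c) b)) = cword c := pw_rcons H2.
  have P2 : mk (rcons (cword c) b) != root0.
    apply/eqP => E; have := congr1 (@cword d k) E.
    by rewrite H2 cword_root0; case: (cword c).
  by split; [apply/andP; split | apply/eqP].
rewrite mul0n; apply/eqP; rewrite cards_eq0; apply/eqP/setP => x; rewrite !inE.
apply/negP => /andP[/andP[xr xT] /eqP E].
case/and4P: dT => _ _ /forallP /(_ c); rewrite cT /= => /orP[].
  by move=> HAC; move: cI; rewrite inE cT HAC.
move/forallP => NC.
have [y [z Ex]] := nonroot xr.
rewrite (pw_rcons Ex) in E.
by have := NC z; rewrite -E -Ex inT_code xT.
Qed.

Lemma card_tree T : dcatalan T -> #|T| = d * k + 1.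
Proof.
move=> dT; have dT' := dT; case/and4P: dT' => Hr /forallP H2 _ /eqP HI.
have [r0T _] := inT_mk Hr; rewrite -/root0 in r0T.
have -> : #|T| = #|T :\ root0| + 1 by rewrite (cardsD1 root0) r0T addnC.
congr (_ + 1).
set A := T :\ root0.
have inner : forall x, x \in A -> \sum_(c in T) (pw x == cword c : nat) = 1.
  move=> x; rewrite inE => /andP[xr xT].
  have Hp : inT T (pw x).
    have := H2 x; rewrite xT /= => /forallP.
    move/(_ (@Ordinal k.+1 (size (cword x)).-1 _)); apply.
    by apply: leq_ltn_trans (leq_pred _) _; rewrite ltnS size_cword.
  rewrite sum_bool (_ : [set _ in _ | _] = [set mk (pw x)]) ?cards1 //.
  have [H1 H2'] := inT_mk Hp.
  apply/setP => c; rewrite !inE; apply/andP/eqP.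
    by case=> _ /eqP ->; rewrite mk_cword.
  by move=> ->; rewrite H1 H2'.
rewrite -sum1_card (eq_bigr _ (fun x Hx => esym (inner x Hx))) exchange_big /=.
rewrite (eq_bigr (fun c => (c \in Int T) * d)).
  rewrite -big_distrl /= sum_bool mulnC; congr (_ * _).
  rewrite (_ : [set i in T | i \in Int T] = Int T); first exact: HI.
  by apply/setP => c; rewrite /Int !inE andbA andbb.
move=> c cT; rewrite sum_bool -(children_card dT cT); apply: eq_card => x.
by rewrite !inE.
Qed.

Lemma card_small (b0 : 'I_d) p :
  #|[set c : code d k | size (cword c) < p]| <= \sum_(j < p) d ^ j.
Proof.
elim: p => [|p IH].
  by rewrite big_ord0 leqn0 cards_eq0; apply/eqP/setP => c; rewrite !inE.
rewrite big_ord_recr /=.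
rewrite (_ : [set c | _ < p.+1] = [set c : code d k | size (cword c) < p] :|:
                                   [set c : code d k | size (cword c) == p]).
  rewrite cardsU; apply: leq_trans (leq_subr _ _) _; apply: leq_add => //.
  pose f (c : code d k) := [ffun i : 'I_p => nth b0 (cword c) i].
  rewrite -(@card_in_imset _ _ f).
    by apply: leq_trans (max_card _) _; rewrite card_ffun !card_ord.
  move=> c1 c2; rewrite !inE => /eqP s1 /eqP s2 E; apply: cword_inj.
  apply: (eq_from_nth (x0 := b0)); first by rewrite s1 s2.
  move=> i; rewrite s1 => ip.
  by have := congr1 (fun F : {ffun 'I_p -> 'I_d} => F (Ordinal ip)) E; rewrite /f !ffunE.
by apply/setP => c; rewrite !inE ltnS leq_eqVlt orbC.
Qed.

End Count.

Lemma sum_bool' (I : finType) (P0 P : pred I) :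
  \sum_(i | P0 i) (P i : nat) = #|[set i | P0 i && P i]|.
Proof.
rewrite (eq_bigr (fun i => if P i then 1 else 0)); last by move=> i _; case: (P i).
rewrite -big_mkcondr sum1_card; apply: eq_card => i; by rewrite !inE.
Qed.

Local Open Scope ring_scope.

Theorem proposition6p1 (R : realFieldType) (d p k : nat) :
  (2 <= d)%N -> (1 <= p)%N -> (1 <= k)%N ->
  (exists c : {set {set code d k}} -> R,
     forall T : {set code d k}, dcatalan T ->
       psi R p T = \sum_(S in shuffle_classes d k p) c S * (T \in S)%:R)
  /\ (forall T : {set code d k}, dcatalan T ->
       `|psi R p T - 1| <=
         ((d%:R ^+ p - 1) / (d%:R - 1)) / (d * k + 1)%N%:R).
Proof.
move=> d2 p1 k1.
set N : R := (d * k + 1)%N%:R.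
split.
  exists (fun S => N^-1 * #|[set v : code d k | (p <= size (cword v))%N && (S \in classes_at v p)]|%:R).
  move=> T _; rewrite /psi -/N.
  rewrite (exchange_big_dep (fun S => S \in shuffle_classes d k p)) /=; last first.
    by move=> v S cv Sv; apply/bigcupP; exists v.
  rewrite mulr_sumr; apply: eq_bigr => S _.
    rewrite -mulrA; congr (_ * _).
  rewrite (eq_bigr (fun i => (T \in S)%:R * 1%:R)); last by move=> i _; rewrite mulr1.
  rewrite -mulr_sumr -natr_sum sum1_card mulrC; congr (_%:R * _).
  by apply: eq_card => v; rewrite inE.
move=> T dT.
have Hpsi : psi R p T = N^-1 * #|[set v : code d k | (p <= size (cword v))%N && (v \in T)]|%:R.
  rewrite /psi -/N; congr (_ * _).
  rewrite (eq_bigr (fun v => (v \in T)%:R)); last first.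
    by move=> v _; rewrite -natr_sum sum_bool count_classes.
  by rewrite -natr_sum sum_bool'.
set a0 := #|[set v : code d k | (p <= size (cword v))%N && (v \in T)]|.
set b0 := #|[set v : code d k | (size (cword v) < p)%N && (v \in T)]|.
have Hab : (a0 + b0 = d * k + 1)%N.
  rewrite -(card_tree dT) -(cardsID [set v : code d k | (p <= size (cword v))%N] T).
  congr (_ + _); apply: eq_card => v; rewrite !inE ?ltnNge; by case: (v \in T); rewrite ?andbT ?andbF.
set S0 := (\sum_(j < p) d ^ j)%N.
have Hb : (b0 <= S0)%N.
  apply: leq_trans (@card_small d k (Ordinal (ltnW d2)) p).
  by apply: subset_leq_card; apply/subsetP => v; rewrite !inE => /andP[].
have HC : (d%:R ^+ p - 1) / (d%:R - 1) = (S0%:R : R).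
  have e1 : (d%:R ^+ p - 1 : R) = ((d ^ p).-1)%:R.
    by rewrite -natrX -subn1 natrB // expn_gt0 ltnW.
  have e2 : (d%:R - 1 : R) = (d.-1)%:R by rewrite -subn1 natrB // ltnW.
  have e3 : (d.-1)%:R != 0 :> R by rewrite pnatr_eq0; apply/eqP; lia.
  by rewrite e1 e2 predn_exp natrM [X in X / _]mulrC mulfK.
rewrite Hpsi HC.
have NE : N = a0%:R + b0%:R by rewrite /N -Hab natrD.
have Npos : 0 < N by rewrite /N ltr0n addn1.
have NN : N != 0 by rewrite gt_eqF.
have -> : N^-1 * a0%:R - 1 = - (b0%:R / N).
  have NE' : a0%:R - N = - b0%:R by rewrite NE opprD addrA subrr add0r.
  by rewrite -[X in _ - X](mulVf NN) -mulrBr NE' mulrN mulrC.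
rewrite normrN ger0_norm; last by rewrite divr_ge0 // ltW.
by rewrite ler_pM2r ?invr_gt0 // ler_nat.
Qed.
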